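(* Let $N$ be a positive integer and $\epsilon_s>0$, and let $\mathcal A=\{x_1,\dots,x_N\}$ be $N$ real data points in a bounded interval $[x_L,x_U]$. Let $N_c^{med}$ be the size of the smaller of the two blocks $\mathcal A\cap[x_L,r)$, $\mathcal A\cap[r,x_U]$ when the split point $r$ is drawn from the density on $[x_L,x_U]$ proportional to $\exp\{\epsilon_s q(r)/2\}$ with $q(r)=-\big|\,|\mathcal A\cap[x_L,r)|-|\mathcal A\cap[r,x_U]|\,\big|$ (the differentially private median split), and let $N_c^{rand}$ be the corresponding size when the split point $r$ is drawn uniformly at random from $[x_L,x_U]$. Then for any $0<t<N/2$, $$\Pr(N_c^{med}\le t)\le\Pr(N_c^{rand}\le t).$$
   Context: The density proportional to $\exp\{\epsilon_s q(r)/2\}$ is taken with respect to Lebesgue measure on $[x_L,x_U]$; this is the exponential mechanism giving an $\epsilon_s$-differentially private median split. *)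

(* Defs.v *)
From HB Require Import structures.
From mathcomp Require Import all_boot all_order all_algebra.
From mathcomp Require Import all_classical all_reals all_analysis.
Set Implicit Arguments. Unset Strict Implicit. Unset Printing Implicit Defensive.
Import Order.TTheory GRing.Theory Num.Theory.
Local Open Scope classical_set_scope.
Local Open Scope ring_scope.

Section DPMedian.
Variables (R : realType) (N : nat) (x : 'I_N -> R) (xL xU : R).

Definition cnt_left (r : R) : nat :=
  count (fun i => (xL <= x i) && (x i < r)) (enum 'I_N).

Definition cnt_right (r : R) : nat :=
  count (fun i => (r <= x i) && (x i <= xU)) (enum 'I_N).

Definition qscore (r : R) : R :=
  - `| (cnt_left r)%:R - (cnt_right r)%:R |.

Definition Nc (r : R) : nat := minn (cnt_left r) (cnt_right r).

Definition med_weight (eps : R) (r : R) : R := expR (eps * qscore r / 2).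

Definition small_event (t : R) : set R := [set r | (Nc r)%:R <= t].

Definition prob_med (eps t : R) : R :=
  fine (\int[lebesgue_measure]_(r in [set` `[xL, xU]] `&` small_event t)
          (med_weight eps r)%:E)
  / fine (\int[lebesgue_measure]_(r in [set` `[xL, xU]]) (med_weight eps r)%:E).

Definition prob_rand (t : R) : R :=
  fine (lebesgue_measure ([set` `[xL, xU]] `&` small_event t)) / (xU - xL).

End DPMedian.

(* Main.v *)
Require Import Defs.
From HB Require Import structures.
From mathcomp Require Import all_boot all_order all_algebra.
From mathcomp Require Import all_classical all_reals all_analysis.
From mathcomp Require Import lra measurable_realfun.
Import Order.TTheory GRing.Theory Num.Theory.
Local Open Scope classical_set_scope.
Local Open Scope ring_scope.

Lemma ebound (R : realType) (e : \bar R) (c : R) :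
  (0 <= e)%E -> (e <= c%:E)%E -> e = (fine e)%:E.
Proof. by case: e. Qed.

Section Aux.
Variables (R : realType) (N : nat) (x : 'I_N -> R) (xL xU : R).
Hypothesis hx : forall i, xL <= x i <= xU.

Lemma cnt_sum r : (cnt_left x xL r + cnt_right x xU r = N)%N.
Proof.
rewrite /cnt_left /cnt_right.
rewrite -[in RHS](size_enum_ord N) -(count_predC (fun i => (xL <= x i) && (x i < r))).
congr (_ + _)%N; apply: eq_count => i /=.
have /andP[h1 h2] := hx i.
by rewrite h1 h2 /= andbT -leNgt.
Qed.

Lemma qscoreE r : qscore x xL xU r = 2 * (Nc x xL xU r)%:R - N%:R.
Proof.
rewrite /qscore /Nc.
have := cnt_sum r.
set a := cnt_left x xL r; set b := cnt_right x xU r => <-.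
case: (leqP a b) => ab.
  rewrite ler0_norm ?subr_le0 ?ler_nat // natrD; lra.
rewrite ger0_norm ?subr_ge0 ?ler_nat ?(ltnW ab) // natrD; lra.
Qed.

Lemma measurable_weight eps : measurable_fun setT (med_weight x xL xU eps).
Proof.
rewrite /med_weight.
have hq : measurable_fun setT (qscore x xL xU).
  rewrite /qscore.
  apply: measurable_realfun.measurable_funN.
  apply: (measurableT_comp (@measurable_realfun.normr_measurable R setT)).
  apply: measurable_realfun.measurable_funB.
  - apply: measurable_realfun.nondecreasing_measurable => // r s rs.
    rewrite ler_nat /cnt_left; apply: sub_count => i /= /andP[-> h] /=.
    exact: lt_le_trans h rs.
  - apply: measurable_realfun.nonincreasing_measurable => // r s rs.
    rewrite ler_nat /cnt_right; apply: sub_count => i /= /andP[h ->].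
    by rewrite andbT (le_trans rs h).
have hg : measurable_fun setT (fun r => eps * qscore x xL xU r / 2).
  apply: (measurable_realfun.measurable_funM (f := fun r => eps * qscore x xL xU r) (g := cst 2^-1)); last exact: measurable_cst.
  apply: (measurable_realfun.measurable_funM (f := cst eps)); first exact: measurable_cst.
  exact: hq.
have := measurableT_comp (@measurable_realfun.measurable_expR R) hg.
exact.
Qed.

End Aux.

Theorem mainTheorem4 (R : realType) (N : nat) (x : 'I_N -> R) (xL xU eps t : R) :
  (0 < N)%N -> 0 < eps -> xL < xU ->
  (forall i, xL <= x i <= xU) ->
  0 < t < N%:R / 2 ->
  prob_med x xL xU eps t <= prob_rand x xL xU t.
Proof.
move=> N0 eps0 LU hx _.
set w := med_weight x xL xU eps.
set W := expR (eps * (2 * t - N%:R) / 2).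
have W0 : 0 < W by exact: expR_gt0.
have wE r : w r = expR (eps * (2 * (Nc x xL xU r)%:R - N%:R) / 2).
  by rewrite /w /med_weight qscoreE.
have wA r : (w r <= W) = ((Nc x xL xU r)%:R <= t).
  rewrite wE /W ler_expR.
  by rewrite ler_pM2r ?invr_gt0 // ler_pM2l // lerD2r ler_pM2l.
have w1 r : w r <= 1.
  rewrite /w /med_weight expR_le1.
  have : qscore x xL xU r <= 0 by rewrite /qscore oppr_le0.
  nra.
have w0 r : 0 <= w r by exact: expR_ge0.
have mw := @measurable_weight R N x xL xU eps.
set I := [set` `[xL, xU]].
set A := small_event x xL xU t.
have mI : measurable I by exact: measurable_itv.
have mA : measurable A.
  have -> : A = w @^-1` `]-oo, W].
    apply/seteqP; split => r /=; rewrite /A /small_event /= in_itv /= wA //.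
  by rewrite -[_ @^-1` _]setTI; apply: mw => //.
have mIA : measurable (I `&` A) by exact: measurableI.
have mIdA : measurable (I `\` A) by exact: measurableD.
set mu := (@lebesgue_measure R).
have muI : mu I = (xU - xL)%:E.
  by rewrite /mu lebesgue_measure_itv /= lte_fin LU.
have muU : mu I = (mu (I `&` A) + mu (I `\` A))%E.
  rewrite -measureU //; first by rewrite setUIDK.
  by apply/seteqP; split => r //= [[_ h] [_ h2]].
have mfT : measurable_fun setT (EFin \o w).
  exact/measurable_EFinP.
have mfD D : measurable D -> measurable_fun D (EFin \o w).
  by move=> mD; exact: measurable_funTS mfT.
have [al alE] : exists al, mu (I `&` A) = al%:E.
  move: muU (measure_ge0 mu (I `&` A)) (measure_ge0 mu (I `\` A)); rewrite muI.
  by case: (mu (I `&` A)) => [a||]; case: (mu (I `\` A)) => [b||] //= _ _ _; exists a.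
have [be beE] : exists be, mu (I `\` A) = be%:E.
  move: muU (measure_ge0 mu (I `&` A)) (measure_ge0 mu (I `\` A)); rewrite muI.
  by case: (mu (I `&` A)) => [a||]; case: (mu (I `\` A)) => [b||] //= _ _ _; exists b.
have al0 : 0 <= al by rewrite -lee_fin -alE measure_ge0.
have be0 : 0 <= be by rewrite -lee_fin -beE measure_ge0.
have albe : al + be = xU - xL.
  by apply/eqP; rewrite -eqe -muI muU alE beE.
have ha : (\int[mu]_(r in I `&` A) (w r)%:E <= (W * al)%:E)%E.
  rewrite EFinM -alE -integral_cst //.
  apply: ge0_le_integral => //; try exact: mfD.
  - by move=> r _; rewrite lee_fin.
  - by move=> r [_ Ar]; rewrite lee_fin wA.
have hb : ((W * be)%:E <= \int[mu]_(r in I `\` A) (w r)%:E)%E.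
  rewrite EFinM -beE -integral_cst //.
  apply: ge0_le_integral => //; try exact: mfD.
  - by move=> r _; rewrite lee_fin ltW.
  - move=> r [_ Ar]; rewrite lee_fin; apply/ltW; rewrite ltNge wA.
    by apply/negP.
have hb1 : (\int[mu]_(r in I `\` A) (w r)%:E <= (1 * be)%:E)%E.
  rewrite EFinM -beE -integral_cst //.
  apply: ge0_le_integral => //; try exact: mfD.
  - by move=> r _; rewrite lee_fin.
  - by move=> r _; rewrite lee_fin.
have w0E r : (I `&` A) r \/ (I `\` A) r -> (0 <= (w r)%:E)%E by rewrite lee_fin.
have aE := @ebound R _ _ (integral_ge0 mu (fun r h => w0E r (or_introl h))) ha.
have bE := @ebound R _ _ (integral_ge0 mu (fun r h => w0E r (or_intror h))) hb1.
set a := fine (\int[mu]_(r in I `&` A) (w r)%:E) in aE.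
set b := fine (\int[mu]_(r in I `\` A) (w r)%:E) in bE.
have a0 : 0 <= a by rewrite -lee_fin -aE integral_ge0 // => r _; rewrite lee_fin.
have b0 : 0 <= b by rewrite -lee_fin -bE integral_ge0 // => r _; rewrite lee_fin.
have haR : a <= W * al by rewrite -lee_fin -aE.
have hbR : W * be <= b by rewrite -lee_fin -bE.
have IE : (\int[mu]_(r in I) (w r)%:E = (a + b)%:E)%E.
  rewrite -{1}(setUIDK I A) ge0_integral_setU //.
  - by rewrite aE bE.
  - by apply: mfD; exact: measurableU.
  - by apply/disj_setPS => r [[_ h] [_ h2]].
rewrite /prob_med /prob_rand -/I -/A -/mu -/w IE alE -/a /= -albe.
have [->|ab0] := eqVneq (a + b) 0.
  by rewrite invr0 mulr0 divr_ge0 //; lra.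
have abp : 0 < a + b by rewrite lt0r ab0 /=; lra.
have [e|alb0] := eqVneq (al + be) 0.
  by move: albe LU e; lra.
have alp : 0 < al + be by rewrite lt0r alb0 /=; lra.
rewrite ler_pdivrMr // mulrAC ler_pdivlMr //.
have h1 : a * be <= W * al * be by rewrite ler_wpM2r.
have h2 : al * (W * be) <= al * b by rewrite ler_wpM2l.
rewrite mulrDr mulrDr.
lra.
Qed.
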